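(* Consider $\beta=0$ and let $h_c^H:=-H'(0)$. For every $\varepsilon>0$ and every $h\ne h_c^H$, \[ Z^\Psi_{N,h}\ \sim\ Z^{\Psi,\varepsilon}_{N,h}:=\sum_{m\in\{1,\dots,N\}:\,|m/N-\rho_h|\le\varepsilon}e^{hm}\Psi(m,N)\,\mathbf P(\tau_m=N)\qquad(N\to\infty). \]
   Context: Let $\tau=(\tau_j)_{j\ge0}$ be a renewal process with $\tau_0=0$ and i.i.d. increments with values in $\mathbb N$, law $\mathbf P$; $K(n)=\mathbf P(\tau_1=n)>0$ for all $n$, $K(n)\sim C_Kn^{-(1+\alpha)}$, $\alpha>0$, $C_K>0$. Set $\delta_n=\mathbf 1_{n\in\{\tau_0,\tau_1,\dots\}}$. Let $\Psi(m,N)=Q(m,N)\exp(NH(m/N))$ ($N\in\mathbb N$, $1\le m\le N$) where: $H:[0,1]\to\mathbb R\cup\{-\infty\}$ is concave, real analytic in $(0,1)$, continuous on $[0,1]$ (possibly $H(0)$ and/or $H(1)$ equal $-\infty$); $Q\ge0$; for every $b>0$ there is $c>0$ with $Q(m,N)\le ce^{bN}$ for all $m\le N$; for all $0<u<v<1$, $b>0$ there is $c>0$ with $Q(m,N)\ge ce^{-bN}$ whenever $m/N\in[u,v]$. $H'(0):=\lim_{x\searrow0}H'(x)$. $Z^\Psi_{N,h}=\mathbf E[\exp(h\sum_{j=1}^N\delta_j)\Psi(\sum_{j=1}^N\delta_j,N)\delta_N]=\sum_{m=1}^Ne^{hm}\Psi(m,N)\mathbf P(\tau_m=N)$, $\textsc{f}_H(h)=\lim_N\frac1N\log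 Z^\Psi_{N,h}$ (exists), $\textsc{g}(\rho)=\lim_{N\to\infty,m/N\to\rho}\frac1N\log\mathbf P(\tau_m=N)$ (exists), and $\rho_h:=\textsc{f}_H'(h)$, which for $h\ne h_c^H$ is the unique maximizer over $[0,1]$ of $\rho\mapsto h\rho+H(\rho)+\textsc{g}(\rho)$. *)

(* Defs.v *)
From HB Require Import structures.
From mathcomp Require Import all_boot all_order all_algebra.
From mathcomp Require Import all_classical all_reals all_analysis.
Set Implicit Arguments. Unset Strict Implicit. Unset Printing Implicit Defensive.
Import Order.TTheory GRing.Theory Num.Theory.
Import numFieldNormedType.Exports.
Local Open Scope classical_set_scope.
Local Open Scope ring_scope.

(* P(tau_m = N) for the renewal process whose i.i.d. increments have law
   K : nat -> R (K n = P(tau_1 = n)): the m-fold convolution power of K at N. *)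
Fixpoint renewal_prob (R : realType) (K : nat -> R) (m N : nat) : R :=
  match m with
  | 0 => (N == 0%N)%:R
  | m'.+1 => \sum_(k < N.+1) K k * renewal_prob K m' (N - k)
  end.

Definition expNE (R : realType) (N : nat) (x : \bar R) : R :=
  match x with
  | r%:E => expR (N%:R * r)
  | -oo%E => 0
  | +oo%E => 0 (* never used: H does not take the value +oo *)
  end.

Definition Psi (R : realType) (Q : nat -> nat -> R) (H : R -> \bar R)
  (m N : nat) : R :=
  Q m N * expNE N (H (m%:R / N%:R)).

Definition ZPsi (R : realType) (K : nat -> R) (Q : nat -> nat -> R)
  (H : R -> \bar R) (h : R) (N : nat) : R :=
  \sum_(1 <= m < N.+1) expR (h * m%:R) * Psi Q H m N * renewal_prob K m N.

Definition ZPsi_eps (R : realType) (K : nat -> R) (Q : nat -> nat -> R)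
  (H : R -> \bar R) (h rho eps : R) (N : nat) : R :=
  \sum_(1 <= m < N.+1 | `|m%:R / N%:R - rho| <= eps)
     expR (h * m%:R) * Psi Q H m N * renewal_prob K m N.

Definition real_analytic_on (R : realType) (A : set R) (f : R -> R) : Prop :=
  forall x0, A x0 -> exists r : R, 0 < r /\ exists a : nat -> R,
    forall x, `|x - x0| < r ->
      (fun n => \sum_(k < n) a k * (x - x0) ^+ k) @ \oo --> f x.

(* Main.v *)
Require Import Defs.
From HB Require Import structures.
From mathcomp Require Import all_boot all_order all_algebra.
From mathcomp Require Import all_classical all_reals all_analysis.
From mathcomp Require Import lra zify.
Import Order.TTheory GRing.Theory Num.Theory.
Import numFieldNormedType.Exports.
Local Open Scope classical_set_scope.
Local Open Scope ring_scope.

Section Aux.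
Variable R : realType.

Lemma rp_ge0 (K : nat -> R) : (forall n, 0 <= K n) ->
  forall m N, 0 <= renewal_prob K m N.
Proof.
move=> K0; elim=> [|m IH] N /=; first by case: (N == 0%N).
by apply: sumr_ge0 => k _; rewrite mulr_ge0.
Qed.

Lemma sum_ge_term (I : eqType) (r : seq I) (F : I -> R) j : j \in r -> uniq r ->
  (forall i, 0 <= F i) -> F j <= \sum_(i <- r) F i.
Proof.
move=> jr ur F0; rewrite (bigD1_seq j) //= lerDl; exact: sumr_ge0.
Qed.

Lemma sum_gt_term (n : nat) (F : 'I_n -> R) j :
  (forall i, 0 <= F i) -> 0 < F j -> 0 < \sum_(i < n) F i.
Proof.
move=> F0 Fj; rewrite (bigD1 j) //=; apply: (lt_le_trans Fj).
by rewrite lerDl sumr_ge0.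
Qed.

Lemma rp_gt0 (K : nat -> R) : K 0%N = 0 -> (forall n, (0 < n)%N -> 0 < K n) ->
  forall m N, (1 <= m <= N)%N -> 0 < renewal_prob K m N.
Proof.
move=> HK0 HKp; have K0 : forall n, 0 <= K n.
  by case=> [|n]; [rewrite HK0 | apply/ltW/HKp].
elim=> [|m IH] N; first by [].
move=> /andP[_ mN] /=.
have F0 : forall i : 'I_N.+1, 0 <= K i * renewal_prob K m (N - i).
  by move=> i; rewrite mulr_ge0 // rp_ge0.
case: m IH mN F0 => [|m] IH mN F0.
  apply: (@sum_gt_term _ _ (Ordinal (ltnSn N))) => //=.
  by rewrite subnn /= mulr1 HKp.
have h1 : (1 < N.+1)%N by rewrite ltnS (leq_trans _ mN).
apply: (@sum_gt_term _ _ (Ordinal h1)) => //=.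
rewrite mulr_gt0 ?HKp // IH //.
apply/andP; split => //; rewrite leq_subRL //; exact: (leq_trans _ mN).
Qed.
End Aux.


Section Aux2.
Variable R : realType.

Lemma expNE_ge0 N (x : \bar R) : 0 <= expNE N x.
Proof. by case: x => [r| |] //=; rewrite expR_ge0. Qed.

Lemma ratio_facts (m N : nat) : (2 <= N)%N -> m = N./2 ->
  [/\ (1 <= m <= N)%N, 1/4 <= m%:R / N%:R :> R, m%:R / N%:R <= 3/4 :> R,
      0 < m%:R / N%:R :> R & m%:R / N%:R < 1 :> R].
Proof.
move=> N2 ->; set m0 := N./2.
have h1 : (1 <= m0)%N by rewrite /m0 -divn2; have := divn_eq N 2; have := ltn_pmod N (isT : 0 < 2)%N; lia.
have h2 : (m0 < N)%N by rewrite /m0 -divn2; have := divn_eq N 2; have := ltn_pmod N (isT : 0 < 2)%N; lia.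
have h3 : (N <= 4 * m0)%N by rewrite /m0 -divn2; have := divn_eq N 2; have := ltn_pmod N (isT : 0 < 2)%N; lia.
have h4 : (4 * m0 <= 3 * N)%N by rewrite /m0 -divn2; have := divn_eq N 2; have := ltn_pmod N (isT : 0 < 2)%N; lia.
have Npos : (0 : R) < N%:R by rewrite ltr0n; lia.
have h1r : (1 : R) <= m0%:R by rewrite ler1n.
have h2r : (m0%:R : R) < N%:R by rewrite ltr_nat.
have h3r : (N%:R : R) <= 4 * m0%:R by rewrite -natrM ler_nat.
have h4r : 4 * (m0%:R : R) <= 3 * N%:R by rewrite -!natrM ler_nat.
set x := m0%:R / N%:R.
have e : (m0%:R : R) = x * N%:R by rewrite /x mulfVK // gt_eqF.
rewrite e in h1r h2r h3r h4r; clearbody x.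
split; first by rewrite h1 ltnW.
all: clear e h1 h2 h3 h4.
- have : 0 <= N%:R * (4*x - 1) by lra.
  by rewrite pmulr_rge0 //; lra.
- have : 0 <= N%:R * (3 - 4*x) by lra.
  by rewrite pmulr_rge0 //; lra.
- have : 0 < N%:R * x by lra.
  by rewrite pmulr_rgt0.
- have : 0 < N%:R * (1 - x) by lra.
  by rewrite pmulr_rgt0 //; lra.
Qed.
End Aux2.

Section Aux3.
Variable R : realType.
Lemma term_ge0 (K : nat -> R) (Q : nat -> nat -> R) (H : R -> \bar R) x m N : (forall n, 0 <= K n) -> (forall m N, 0 <= Q m N) ->
  0 <= expR (x * m%:R) * Psi Q H m N * renewal_prob K m N.
Proof.
move=> K0 Q0; rewrite !mulr_ge0 ?expR_ge0 ?Q0 ?expNE_ge0 ?rp_ge0 //.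
Qed.

Lemma Z_gt0 (K : nat -> R) (Q : nat -> nat -> R) (H : R -> \bar R) :
  K 0%N = 0 -> (forall n, (0 < n)%N -> 0 < K n) -> (forall m N, 0 <= Q m N) ->
  (forall u v b : R, 0 < u -> u < v -> v < 1 -> 0 < b ->
     exists c : R, 0 < c /\ forall m N : nat, (1 <= m <= N)%N ->
       (u <= m%:R / N%:R <= v)%R -> c * expR (- (b * N%:R)) <= Q m N) ->
  (forall x : R, (0 < x < 1)%R -> H x \is a fin_num) ->
  forall x N, (2 <= N)%N -> 0 < ZPsi K Q H x N.
Proof.
move=> HK0 HKp Q0 HQlow Hfin x N N2.
have K0 : forall n, 0 <= K n.
  by case=> [|n]; [rewrite HK0 | apply/ltW/HKp].
have [c [c0 Hc]] := HQlow (1/4) (3/4) 1 ltac:(lra) ltac:(lra) ltac:(lra) ltac:(lra).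
have [h1 h2 h3 h4 h5] := @ratio_facts R N./2 N N2 erefl.
rewrite /ZPsi; apply: (@lt_le_trans _ _ (expR (x * (N./2)%:R) * Psi Q H N./2 N * renewal_prob K N./2 N)).
  rewrite mulr_gt0 ?rp_gt0 // mulr_gt0 ?expR_gt0 // /Psi.
  have hr : ((1/4 : R) <= (N./2)%:R / (N%:R : R) <= (3/4 : R)).
    by apply/andP; split; [exact: h2 | exact: h3].
  have Qlow := Hc _ _ h1 hr.
  have : H ((N./2)%:R / N%:R) \is a fin_num by apply: Hfin; rewrite h4 h5.
  case: (H _) => [r| |] // _ /=.
  rewrite mulr_gt0 ?expR_gt0 //; apply: lt_le_trans Qlow.
  by rewrite mulr_gt0 ?expR_gt0.
apply: (@sum_ge_term R nat (index_iota 1 N.+1) (fun m => expR (x * m%:R) * Psi Q H m N * renewal_prob K m N)).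
- by rewrite mem_index_iota ltnS; case/andP: h1 => -> ->.
- exact: iota_uniq.
- by move=> i; apply: term_ge0.
Qed.
End Aux3.


Section Aux4.
Variable R : realType.

Lemma term_bound (h d rho eps n y : R) : 0 < d -> 0 < n ->
  ~~ (`|y / n - rho| <= eps) ->
  expR (h * y) <= expR (- (d * (rho + eps) * n)) * expR ((h + d) * y)
                  + expR (d * (rho - eps) * n) * expR ((h - d) * y).
Proof.
move=> d0 n0; rewrite -ltNge ltr_normr => /orP[H1|H1].
- have : rho + eps < y / n by lra.
  rewrite ltr_pdivlMr // => H2.
  apply: (@le_trans _ _ (expR (- (d * (rho + eps) * n)) * expR ((h + d) * y))).
    by rewrite -expRD ler_expR; nra.
  by rewrite lerDl mulr_ge0 ?expR_ge0.
- have : y / n < rho - eps by lra.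
  rewrite ltr_pdivrMr // => H2.
  apply: (@le_trans _ _ (expR (d * (rho - eps) * n) * expR ((h - d) * y))).
    by rewrite -expRD ler_expR; nra.
  by rewrite lerDr mulr_ge0 ?expR_ge0.
Qed.

Lemma bad_bound (K : nat -> R) (Q : nat -> nat -> R) (H : R -> \bar R) (h d rho eps : R) N :
  (forall n, 0 <= K n) -> (forall m N, 0 <= Q m N) -> 0 < d -> (0 < N)%N ->
  0 <= ZPsi_eps K Q H h rho eps N <= ZPsi K Q H h N /\
  ZPsi K Q H h N - ZPsi_eps K Q H h rho eps N <=
    expR (- (d * (rho + eps) * N%:R)) * ZPsi K Q H (h + d) N
    + expR (d * (rho - eps) * N%:R) * ZPsi K Q H (h - d) N.
Proof.
move=> K0 Q0 d0 N0.
have n0 : (0 : R) < N%:R by rewrite ltr0n.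
set good := fun m : nat => `|m%:R / N%:R - rho| <= eps.
have E : ZPsi K Q H h N = ZPsi_eps K Q H h rho eps N +
   \sum_(1 <= m < N.+1 | ~~ good m) expR (h * m%:R) * Psi Q H m N * renewal_prob K m N.
  by rewrite /ZPsi (bigID good) /=.
have Bge0 : 0 <= \sum_(1 <= m < N.+1 | ~~ good m) expR (h * m%:R) * Psi Q H m N * renewal_prob K m N.
  by apply: sumr_ge0 => m _; apply: term_ge0.
have Ege0 : 0 <= ZPsi_eps K Q H h rho eps N.
  by apply: sumr_ge0 => m _; apply: term_ge0.
split.
  by rewrite Ege0 /= E lerDl.
rewrite E (addrC (ZPsi_eps _ _ _ _ _ _ _)) addrK.
set G := fun m : nat => (expR (- (d * (rho + eps) * N%:R)) * expR ((h + d) * m%:R)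
                  + expR (d * (rho - eps) * N%:R) * expR ((h - d) * m%:R)) * (Psi Q H m N * renewal_prob K m N).
have G0 : forall m, 0 <= G m.
  move=> m; rewrite /G mulr_ge0 ?addr_ge0 ?mulr_ge0 ?expR_ge0 ?expNE_ge0 ?rp_ge0 //.
apply: (@le_trans _ _ (\sum_(1 <= m < N.+1 | ~~ good m) G m)).
  apply: ler_sum => m /negP/negP Hm.
  rewrite -mulrA /G ler_wpM2r ?mulr_ge0 ?expNE_ge0 ?rp_ge0 //.
  exact: term_bound.
apply: (@le_trans _ _ (\sum_(1 <= m < N.+1) G m)).
  rewrite [X in _ <= X](bigID good) /= lerDr; exact: sumr_ge0.
rewrite /G /ZPsi 2!mulr_sumr -big_split /=.
apply: ler_sum => m _; rewrite mulrDl !mulrA; done.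
Qed.
End Aux4.


Section Aux5.
Variable R : realType.

Lemma ln_upper (n Z f e : R) : 0 < n -> `|f - ln Z / n| < e -> ln Z <= n * (f + e).
Proof.
move=> n0; rewrite ltr_norml => /andP[H1 H2].
have E : ln Z = n * (ln Z / n) by rewrite mulrC mulfVK // gt_eqF.
rewrite E; rewrite ler_pM2l //; lra.
Qed.

Lemma ln_lower (n Z f e : R) : 0 < n -> `|f - ln Z / n| < e -> n * (f - e) <= ln Z.
Proof.
move=> n0; rewrite ltr_norml => /andP[H1 H2].
have E : ln Z = n * (ln Z / n) by rewrite mulrC mulfVK // gt_eqF.
rewrite E; rewrite ler_pM2l //; lra.
Qed.

Lemma final_alg (n Z Zp Zm Ze f0 fp fm d rho eps : R) :
  0 < n -> 0 < Z -> 0 < Zp -> 0 < Zm -> 0 < d -> 0 < eps ->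
  Ze <= Z ->
  Z - Ze <= expR (- (d * (rho + eps) * n)) * Zp + expR (d * (rho - eps) * n) * Zm ->
  `|f0 - ln Z / n| < d * eps / 8 -> `|fp - ln Zp / n| < d * eps / 8 ->
  `|fm - ln Zm / n| < d * eps / 8 ->
  fp - f0 < d * rho + d * eps / 2 -> fm - f0 < - (d * rho) + d * eps / 2 ->
  1 - 2 * expR (n * (- (d * eps / 4))) <= Ze / Z <= 1.
Proof.
move=> n0 Z0 Zp0 Zm0 d0 e0 ZeZ bad h0 hp hm dp dm.
have l0 := @ln_lower _ _ _ _ n0 h0.
have lp := @ln_upper _ _ _ _ n0 hp.
have lm := @ln_upper _ _ _ _ n0 hm.
set q := expR (n * (- (d * eps / 4))).
have b1 : expR (- (d * (rho + eps) * n)) * Zp <= q * Z.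
  rewrite -[Zp](@lnK _ Zp) ?posrE // -[Z in _ <= _ * Z](@lnK _ Z) ?posrE // -!expRD ler_expR.
  have : n * (fp - f0 - d * rho - d * eps / 2) <= 0 by rewrite pmulr_rle0 //; lra.
  lra.
have b2 : expR (d * (rho - eps) * n) * Zm <= q * Z.
  rewrite -[Zm](@lnK _ Zm) ?posrE // -[Z in _ <= _ * Z](@lnK _ Z) ?posrE // -!expRD ler_expR.
  have : n * (fm - f0 + d * rho - d * eps / 2) <= 0 by rewrite pmulr_rle0 //; lra.
  lra.
apply/andP; split; last by rewrite ler_pdivrMr // mul1r.
rewrite ler_pdivlMr //.
lra.
Qed.
End Aux5.


Lemma deriv_pick (R : realType) (f : R -> R) (h rho e : R) : is_derive h 1 f rho -> 0 < e ->
  exists d, 0 < d /\ d^-1 * (f (d + h) - f h) < rho + e /\ rho - e < (- d)^-1 * (f (- d + h) - f h).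
Proof.
move=> [ex dv] e0.
have Hd : (fun t => t^-1 *: ((f \o shift h) (t *: 1) - f h)) @ 0^' --> rho.
  by rewrite -dv.
move/cvgrPdist_lt/(_ e e0): Hd.
move=> /nbhs_ballP[r /= r0 Hr].
have Hr' : forall t, `|t| < r -> t != 0 -> `|rho - t^-1 * (f (t + h) - f h)| < e.
  move=> t tr t0; have := Hr t; rewrite /ball /= sub0r normrN => /(_ tr t0).
  by rewrite -[t%:A]/(t * 1) mulr1.
exists (r / 2); split; first by lra.
have r2 : `|r / 2| < r by rewrite ger0_norm; lra.
have r2' : `|- (r / 2)| < r by rewrite normrN ger0_norm; lra.
have := Hr' _ r2 ltac:(rewrite gt_eqF //; lra).
have := Hr' _ r2' ltac:(rewrite lt_eqF //; lra).
rewrite !ltr_norml => /andP[a1 a2] /andP[b1 b2].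
split; lra.
Qed.

Theorem lemma4p2 (R : realType)
  (* renewal law *)
  (K : nat -> R) (alpha CK : R)
  (HK0 : K 0%N = 0)
  (HKpos : forall n, (0 < n)%N -> 0 < K n)
  (HKsum : (fun n => \sum_(k < n) K k) @ \oo --> (1 : R))
  (Halpha : 0 < alpha) (HCK : 0 < CK)
  (HKasym : (fun n : nat => K n / (CK * n%:R `^ (- (1 + alpha)))) @ \oo
              --> (1 : R))
  (* H : [0,1] -> R u {-oo} *)
  (H : R -> \bar R)
  (HnotPinf : forall x : R, (0 <= x <= 1)%R -> H x != +oo%E)
  (Hfin : forall x : R, (0 < x < 1)%R -> H x \is a fin_num)
  (Hconc : forall x y t : R, (0 <= x <= 1)%R -> (0 <= y <= 1)%R -> (0 <= t <= 1)%R ->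
     (t%:E * H x + ((1 - t)%R)%:E * H y <= H (t * x + (1 - t) * y)%R)%E)
  (Hanal : real_analytic_on `]0, 1[ (fine \o H))
  (Hcont : {within `[0, 1], continuous H})
  (* Q *)
  (Q : nat -> nat -> R)
  (HQ0 : forall m N, 0 <= Q m N)
  (HQup : forall b : R, 0 < b -> exists c : R, 0 < c /\
     forall m N : nat, (m <= N)%N -> Q m N <= c * expR (b * N%:R))
  (HQlow : forall u v b : R, 0 < u -> u < v -> v < 1 -> 0 < b ->
     exists c : R, 0 < c /\ forall m N : nat, (1 <= m <= N)%N ->
       (u <= m%:R / N%:R <= v)%R -> c * expR (- (b * N%:R)) <= Q m N)
  (* free energy f_H and rho_h := f_H'(h) *)
  (fH : R -> R)
  (HfH : forall h', (fun N : nat => ln (ZPsi K Q H h' N) / N%:R) @ \oo --> fH h')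
  (h : R)
  (* h <> h_c^H := - H'(0), H'(0) := lim_{x -> 0+} H'(x) (in R u {+oo}) *)
  (Hhc : ~ ((fun x : R => (derive1 (fine \o H) x)%:E) @ 0^'+ --> ((- h)%:E : \bar R)))
  (rho : R) (Hrho : is_derive h 1 fH rho)
  (eps : R) (Heps : 0 < eps) :
  (fun N : nat => ZPsi_eps K Q H h rho eps N / ZPsi K Q H h N) @ \oo --> (1 : R).

Proof.
have K0 : forall n, 0 <= K n.
  by case=> [|n]; [rewrite HK0 | apply/ltW/HKpos].
have [d [d0 [Dp Dm]]] := @deriv_pick R fH h rho (eps / 2) Hrho ltac:(lra).
have dp : fH (h + d) - fH h < d * rho + d * eps / 2.
  move: Dp; rewrite (addrC d) -(ltr_pM2l d0) mulrA mulfV ?gt_eqF // mul1r; lra.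
have dm : fH (h - d) - fH h < - (d * rho) + d * eps / 2.
  move: Dm; rewrite (addrC (- d)) invrN mulNr => Dm.
  have : d^-1 * (fH (h - d) - fH h) < - rho + eps / 2 by lra.
  rewrite -(ltr_pM2l d0) mulrA mulfV ?gt_eqF // mul1r; lra.
have eta0 : 0 < d * eps / 8 by rewrite divr_gt0 ?mulr_gt0.
have c0 := HfH h; have cp := HfH (h + d); have cm := HfH (h - d).
move/cvgrPdist_lt/(_ _ eta0): c0 => c0.
move/cvgrPdist_lt/(_ _ eta0): cp => cp.
move/cvgrPdist_lt/(_ _ eta0): cm => cm.
have q1 : `|expR (- (d * eps / 4))| < 1.
  by rewrite ger0_norm ?expR_ge0 // expR_lt1 oppr_lt0 divr_gt0 ?mulr_gt0.
apply: (@squeeze_cvgr _ _ _ _ (fun N : nat => 1 - 2 * expR (- (d * eps / 4)) ^+ N) (cst 1)).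
- near=> N.
  have N2 : (2 <= N)%N by near: N; exists 2%N.
  have Zpos : forall x, 0 < ZPsi K Q H x N.
    by move=> x; apply: Z_gt0.
  have [/andP[_ bb1] bb2] := @bad_bound R K Q H h d rho eps N K0 HQ0 d0 (ltnW N2).
  rewrite /cst -expRM_natl.
  have nN : (0 : R) < N%:R by rewrite ltr0n (leq_trans _ N2).
  have a0 : `|fH h - ln (ZPsi K Q H h N) / N%:R| < d * eps / 8 by near: N.
  have ap : `|fH (h + d) - ln (ZPsi K Q H (h + d) N) / N%:R| < d * eps / 8 by near: N.
  have am : `|fH (h - d) - ln (ZPsi K Q H (h - d) N) / N%:R| < d * eps / 8 by near: N.
  exact: (@final_alg R N%:R (ZPsi K Q H h N) (ZPsi K Q H (h + d) N) (ZPsi K Q H (h - d) N)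
     (ZPsi_eps K Q H h rho eps N) (fH h) (fH (h + d)) (fH (h - d)) d rho eps
     nN (Zpos h) (Zpos (h + d)) (Zpos (h - d)) d0 Heps bb1 bb2 a0 ap am dp dm).
- have : (fun N : nat => 1 - 2 * expR (- (d * eps / 4)) ^+ N) @ \oo --> (1 - 2 * 0 : R).
    apply: cvgB; first exact: cvg_cst.
    apply: cvgM; first exact: cvg_cst.
    exact: cvg_expr.
  by rewrite mulr0 subr0.
- exact: cvg_cst.
Unshelve. all: end_near.
Qed.
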